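(* Let $k\geq 3$ and let $G$ be a diregular $(2,k,+3)$-digraph. Let $u,v$ be distinct vertices of $G$ having exactly one common out-neighbour $u_2$, and write $N^+(u)=\{u_1,u_2\}$, $N^+(v)=\{v_1,u_2\}$. Then $v_1 \in O(u)$ and $u_1 \in O(v)$.
   Context: A digraph is $k$-geodetic if for every ordered pair of vertices $x,y$ there is at most one directed path from $x$ to $y$ of length at most $k$ (the trivial path of length $0$ counts, so there are no directed cycles of length at most $k$). $M(d,k)=1+d+\dots+d^k$. A diregular $(d,k,+\epsilon)$-digraph is a $k$-geodetic digraph of order $M(d,k)+\epsilon$ in which every vertex has in-degree and out-degree exactly $d$. $N^+(x)$ is the set of out-neighbours of $x$. The distance $d(x,y)$ is the length of a shortest directed path from $x$ to $y$ ($\infty$ if none). The outlier set of a vertex $x$ is $O(x)=\{y\in V(G): d(x,y)\geq k+1\}$; in a diregular $(2,k,+3)$-digraph, $|O(x)|=3$ for every $x$. *)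

(* Defs.v *)
From mathcomp Require Import all_boot.
Set Implicit Arguments. Unset Strict Implicit. Unset Printing Implicit Defensive.

Definition moore (d k : nat) : nat := \sum_(i < k.+1) d ^ i.

Definition walk_from_to (V : finType) (e : rel V) (x y : V) (p : seq V) : Prop :=
  path e x p /\ last x p = y.

(* k-geodetic: at most one directed path of length <= k between any ordered pair.
   (Paths are encoded as vertex sequences; walks of length <= k that are not
   paths would contain a cycle of length <= k, which k-geodeticity excludes,
   so quantifying over walks is the same notion.) *)
Definition k_geodetic (V : finType) (e : rel V) (k : nat) : Prop :=
  forall (x y : V) (p q : seq V),
    walk_from_to e x y p -> size p <= k ->
    walk_from_to e x y q -> size q <= k -> p = q.

Definition out_nbhd (V : finType) (e : rel V) (x : V) : {set V} := [set y | e x y].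
Definition in_nbhd (V : finType) (e : rel V) (x : V) : {set V} := [set y | e y x].

Definition diregular (V : finType) (e : rel V) (d : nat) : Prop :=
  forall x : V, #|out_nbhd e x| = d /\ #|in_nbhd e x| = d.

Definition diregular_dk_eps (V : finType) (e : rel V) (d k eps : nat) : Prop :=
  [/\ k_geodetic e k, diregular e d & #|V| = moore d k + eps].

Definition dist_le (V : finType) (e : rel V) (x y : V) (n : nat) : Prop :=
  exists p : seq V, walk_from_to e x y p /\ size p <= n.

Definition outlier (V : finType) (e : rel V) (k : nat) (x y : V) : Prop :=
  ~ dist_le e x y k.

(* Main.v *)
Require Import Defs.
From mathcomp Require Import all_boot.
From mathcomp Require Import zify.
Set Implicit Arguments. Unset Strict Implicit. Unset Printing Implicit Defensive.

Section Geo.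
Variables (V : finType) (e : rel V).

Fixpoint R (n : nat) (x : V) : {set V} :=
  if n is n'.+1 then x |: \bigcup_(y in out_nbhd e x) R n' y else [set x].

Lemma memR n x y : y \in R n x <-> exists p, walk_from_to e x y p /\ size p <= n.
Proof.
elim: n x y => [|n IH] x y /=.
  rewrite inE; split.
  - by move/eqP->; exists [::].
  - by case=> [[|z p]] [[Hp Hl] Hs] //; rewrite -Hl.
rewrite in_setU1; split.
- case/orP => [/eqP-> | /bigcupP [z Hz /IH [p [[Hp Hl] Hs]]]].
    by exists [::].
  exists (z :: p); split; last by [].
  by rewrite inE in Hz; split => //=; rewrite Hz.
- case=> [[|z p]] [[Hp Hl] Hs].
    by rewrite -Hl eqxx.
  move: Hp => /= /andP [Hz Hp].
  apply/orP; right; apply/bigcupP; exists z; first by rewrite inE.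
  by apply/IH; exists p.
Qed.

Lemma R_refl n x : x \in R n x.
Proof. by apply/memR; exists [::]. Qed.

Lemma R_mono n m x y : n <= m -> y \in R n x -> y \in R m x.
Proof.
move=> nm /memR [p [H Hs]]; apply/memR; exists p; split => //.
exact: leq_trans nm.
Qed.

Lemma R_child n x y z : e x y -> z \in R n y -> z \in R n.+1 x.
Proof.
move=> exy /memR [p [[Hp Hl] Hs]]; apply/memR; exists (y :: p).
by split => //; split => //=; rewrite exy.
Qed.

Lemma R_ext n x y z : y \in R n x -> e y z -> z \in R n.+1 x.
Proof.
move=> /memR [p [[Hp Hl] Hs]] eyz; apply/memR; exists (rcons p z).
split; last by rewrite size_rcons.
split; last by rewrite last_rcons.
by rewrite rcons_path Hp Hl.
Qed.

Lemma R_pred n x y : y \in R n.+1 x -> y != x -> exists2 w, w \in R n x & e w y.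
Proof.
move=> /memR [p [[Hp Hl] Hs]] yx.
case/lastP: p Hp Hl Hs => [|p z] Hp Hl Hs.
  by rewrite -Hl /= eqxx in yx.
rewrite last_rcons in Hl; subst z.
move: Hp; rewrite rcons_path => /andP [Hp He].
exists (last x p) => //; apply/memR; exists p; split => //.
by rewrite size_rcons in Hs.
Qed.

Lemma R_first n x y : y \in R n.+1 x -> y = x \/ exists2 z, e x z & y \in R n z.
Proof.
rewrite /= in_setU1 => /orP [/eqP -> | /bigcupP [z Hz Hy]]; first by left.
by right; exists z => //; rewrite inE in Hz.
Qed.

Variable k : nat.
Hypothesis geo : k_geodetic e k.

Lemma G1 n m x y z a : n < k -> m < k -> e x y -> e x z -> y != z ->
  a \in R n y -> a \in R m z -> False.
Proof.
move=> nk mk exy exz yz /memR [p [[Hp Hl] Hs]] /memR [q [[Hq Hl'] Hs']].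
have W1 : walk_from_to e x a (y :: p) by split => //=; rewrite exy.
have W2 : walk_from_to e x a (z :: q) by split => //=; rewrite exz.
have [E _] : y = z /\ p = q.
  by case: (geo W1 (leq_ltn_trans Hs nk) W2 (leq_ltn_trans Hs' mk)) => -> ->.
by rewrite E eqxx in yz.
Qed.

Lemma G2 n x y : n < k -> e x y -> x \in R n y -> False.
Proof.
move=> nk exy /memR [p [[Hp Hl] Hs]].
have W1 : walk_from_to e x x (y :: p) by split => //=; rewrite exy.
have W2 : walk_from_to e x x [::] by [].
by have := geo W1 (leq_ltn_trans Hs nk) W2 (leq0n _).
Qed.

Lemma G3 n x y z : n.+1 < k -> y \in R n.+1 x -> y \notin R n x -> e y z ->
  z \in R n.+1 x -> False.
Proof.
move=> nk /memR [p [[Hp Hl] Hs]] yn eyz /memR [q [[Hq Hl'] Hs']].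
have sp : size p = n.+1.
  apply/eqP; rewrite eqn_leq Hs /= ltnNge; apply/negP => Hs2.
  by move/negP: yn; apply; apply/memR; exists p.
have W1 : walk_from_to e x z (rcons p z).
  by split; [rewrite rcons_path Hp Hl eyz | rewrite last_rcons].
have W2 : walk_from_to e x z q by [].
have := geo W1 _ W2 (leq_trans Hs' (ltnW nk)).
rewrite size_rcons sp => /(_ nk) E.
by move: Hs'; rewrite -E size_rcons sp ltnn.
Qed.

Hypothesis reg : diregular e 2.

Lemma kids x : exists c1 c2, [/\ c1 != c2, e x c1 & e x c2].
Proof.
have /eqP/cards2P [a [b [ab Hab]]] := (reg x).1.
exists a, b; split => //.
- have : a \in out_nbhd e x by rewrite Hab !inE eqxx.
  by rewrite inE.
- have : b \in out_nbhd e x by rewrite Hab !inE eqxx orbT.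
  by rewrite inE.
Qed.

Lemma other x y : e x y -> exists2 y', e x y' & y' != y.
Proof.
move=> _; have [c1 [c2 [c12 e1 e2]]] := kids x.
case: (eqVneq y c1) => [->|yc1]; first by exists c2; rewrite // eq_sym.
by exists c1; rewrite // eq_sym.
Qed.

Lemma card_R n x : n < k -> #|R n x| = 2 ^ n.+1 - 1.
Proof.
elim: n x => [|n IH] x nk; first by rewrite /= cards1.
have /eqP/cards2P [a [b [ab Hab]]] := (reg x).1.
have ea : e x a.
  have : a \in out_nbhd e x by rewrite Hab !inE eqxx.
  by rewrite inE.
have eb : e x b.
  have : b \in out_nbhd e x by rewrite Hab !inE eqxx orbT.
  by rewrite inE.
have -> : R n.+1 x = x |: (R n a :|: R n b).
  by rewrite /= Hab big_setU1 ?inE // big_set1.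
have nk' : n < k by apply: ltnW.
rewrite cardsU1 cardsU !IH //.
have -> : R n a :&: R n b = set0.
  apply/setP => z; rewrite !inE; apply/negP => /andP [za zb].
  exact: (G1 nk' nk' ea eb ab za zb).
have -> : x \notin R n a :|: R n b.
  rewrite in_setU negb_or; apply/andP; split; apply/negP => H.
    exact: (G2 nk' ea H).
  exact: (G2 nk' eb H).
rewrite cards0 !expnS.
have := expn_gt0 2 n; lia.
Qed.

End Geo.

Lemma moore2 k : moore 2 k = 2 ^ k.+1 - 1.
Proof.
elim: k => [|k IH]; first by rewrite /moore big_ord_recr big_ord0.
rewrite /moore big_ord_recr /= -/(moore 2 k) IH !expnS.
have := expn_gt0 2 k; lia.
Qed.

Lemma four (T : finType) (D : {set T}) a b c d :
  a \in D -> b \in D -> c \in D -> d \in D ->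
  a != b -> a != c -> a != d -> b != c -> b != d -> c != d -> 3 < #|D|.
Proof.
move=> aD bD cD dD ab ac ad bc bd cd.
have U : uniq [:: a; b; c; d] by rewrite /= !inE !negb_or ab ac ad bc bd cd.
have <- : size [:: a; b; c; d] = 4 by [].
rewrite -(card_uniqP U); apply: subset_leq_card.
by apply/subsetP => z; rewrite !inE => /or4P [] /eqP ->.
Qed.

Lemma arith_hD (a b i c nV t : nat) : a = t -> b = t -> c = t - 1 ->
  nV = 2 ^ 1 * t - 1 + 3 -> 0 < t -> a + b - i + c <= nV -> i <= b -> a - i <= 3.
Proof. move=> -> -> -> ->; lia. Qed.

Lemma half (V : finType) (e : rel V) (K : nat) (u v u1 u2 v1 : V) :
  2 <= K -> diregular_dk_eps e 2 K.+1 3 -> u != v ->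
  e u u1 -> e u u2 -> e v v1 -> e v u2 ->
  (forall y, e u y -> y = u1 \/ y = u2) ->
  u1 != u2 -> v1 != u2 -> u1 != v1 ->
  outlier e K.+1 u v1.
Proof.
move=> hK [geo reg cardV] huv euu1 euu2 evv1 evu2 hu u1u2 v1u2 u1v1 Hdist.
have hv1 : v1 \in R e K.+1 u by apply/memR; exact: Hdist.
have g1 : forall x y z a, e x y -> e x z -> y != z -> a \in R e K y -> a \in R e K z -> False.
  by move=> x y z a; apply: (G1 geo (ltnSn K) (ltnSn K)).
have g2 : forall x y, e x y -> x \in R e K y -> False.
  by move=> x y; apply: (G2 geo (ltnSn K)).
have up : forall n x y, n <= K -> y \in R e n x -> y \in R e K x.
  by move=> n x y; apply: R_mono.
have r1 : forall x y, e x y -> y \in R e K x.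
  move=> x y exy; apply: (up 1); first by apply: leq_trans hK.
  exact: (R_child exy (R_refl _ _ _)).
have r2 : forall x y z, e x y -> e y z -> z \in R e K x.
  move=> x y z exy eyz; apply: (up 2) => //.
  exact: (R_child exy (R_child eyz (R_refl _ 0 _))).
have [K'' eK] : exists K'', K = K''.+2 by exists K.-2; case: (K) hK => [|[|K0]].
have g3 : forall x y z, y \in R e K x -> y \notin R e K''.+1 x -> e y z -> z \in R e K x -> False.
  move=> x y z; rewrite eK; apply: (G3 geo); by rewrite eK.
have ext : forall x y z, y \in R e K''.+1 x -> e y z -> z \in R e K x.
  by move=> x y z H eyz; rewrite eK; apply: R_ext H eyz.
pose A := u |: R e K u1. pose B := v |: R e K v1. pose C := R e K u2.
have uA : u \notin R e K u1 by apply/negP => H; exact: g2 _ _ euu1 H.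
have vB : v \notin R e K v1 by apply/negP => H; exact: g2 _ _ evv1 H.
have p0 : 0 < 2 ^ K.+1 by rewrite expn_gt0.
have cA : #|A| = 2 ^ K.+1.
  by rewrite cardsU1 uA (card_R geo reg) // subn1 add1n prednK // expn_gt0.
have cB : #|B| = 2 ^ K.+1.
  by rewrite cardsU1 vB (card_R geo reg) // subn1 add1n prednK // expn_gt0.
have cC : #|C| = 2 ^ K.+1 - 1 by rewrite (card_R geo reg).
have AC : A :&: C = set0.
  apply/setP => z; rewrite !inE; apply/negP => /andP [/orP [/eqP -> | zA] zC].
  - exact: g2 _ _ euu2 zC.
  - exact: g1 _ _ _ _ euu1 euu2 u1u2 zA zC.
have BC : B :&: C = set0.
  apply/setP => z; rewrite !inE; apply/negP => /andP [/orP [/eqP -> | zA] zC].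
  - exact: g2 _ _ evu2 zC.
  - exact: g1 _ _ _ _ evv1 evu2 v1u2 zA zC.
have cV : #|V| = 2 ^ 1 * 2 ^ K.+1 - 1 + 3 by rewrite cardV moore2 -expnD.
have hU : #|A :|: B| + #|C| <= #|V|.
  have := max_card (A :|: B :|: C).
  by rewrite cardsU setIUl AC BC setU0 cards0 subn0.
have hD : #|A :\: B| <= 3.
  have := subset_leq_card (subsetIr A B).
  move: hU; rewrite cardsD cardsU.
  exact: (arith_hD cA cB cC cV p0).
have fin : forall a b c d, a \in A :\: B -> b \in A :\: B -> c \in A :\: B -> d \in A :\: B ->
    a != b -> a != c -> a != d -> b != c -> b != d -> c != d -> False.
  move=> a b c d Ha Hb Hc Hd ab ac ad bc bd cd.
  by move: (four Ha Hb Hc Hd ab ac ad bc bd cd); rewrite ltnNge hD.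
have notB : forall x, x != v -> x \notin R e K v1 -> x \in R e K u1 -> x \in A :\: B.
  move=> x xv xR xA.
  by rewrite in_setD in_setU1 negb_or xv xR in_setU1 xA orbT.
have u1v : u1 != v.
  apply/eqP => E; apply: (g1 u u1 u2 u2 euu1 euu2 u1u2); last exact: R_refl.
  by rewrite E; apply: r1.
have v1K : v1 \in R e K u1.
  case: (R_first hv1) => [E | [z euz Hz]].
    exfalso; apply: (g1 _ _ _ u2 evv1 evu2 v1u2); last exact: R_refl.
    by rewrite E; apply: r1.
  case: (hu z euz) => Ez; first by rewrite -Ez.
  exfalso; apply: (g1 v v1 u2 v1 evv1 evu2 v1u2 (R_refl _ _ _)).
  by rewrite -Ez.
have v1u1 : v1 != u1 by rewrite eq_sym.
have neqA : forall x, x \in R e K u1 -> x != u.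
  by move=> x H; apply/eqP => E; rewrite -E H in uA.
move: (v1K); rewrite {1}eK => /R_pred/(_ v1u1) [w wK ewv1].
have wKK : w \in R e K u1 by apply: (up K''.+1) => //; rewrite eK.
have [w' eww' w'v1] := other reg ewv1.
have wA : w \in A :\: B.
  apply: notB => //.
    apply/eqP => E; apply: (g1 u u1 u2 u2 euu1 euu2 u1u2); last exact: R_refl.
    by apply: (ext _ w) => //; rewrite E.
  by apply/negP => H; apply: (g2 w v1 ewv1 H).
have w'K : w' \in R e K u1 by apply: ext wK eww'.
have w'A : w' \in A :\: B.
  apply: notB => //.
    apply/eqP => E; apply: (g1 w w' v1 v1 eww' ewv1 w'v1); last exact: R_refl.
    by apply: r1; rewrite E.
  by apply/negP => H; apply: (g1 w w' v1 w' eww' ewv1 w'v1 (R_refl _ _ _) H).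
have ww' : w != w'.
  by apply/eqP => E; apply: (g2 w w); [rewrite {2}E | exact: R_refl].
case: (eqVneq w u1) => [Ewu1 | wu1].
  rewrite Ewu1 in ewv1 eww' ww' wA w'A.
  have [c1 [c2 [c12 ec1 ec2]]] := kids reg w'.
  have cAB : forall c, e w' c -> c \in A :\: B.
    move=> c ec; apply: notB.
    - apply/eqP => E; apply: (g1 u1 w' v1 v1 eww' ewv1 w'v1); last exact: R_refl.
      by apply: (r2 _ c _ ec); rewrite E.
    - by apply/negP => H; apply: (g1 u1 w' v1 c eww' ewv1 w'v1 (r1 _ _ ec) H).
    - exact: r2 eww' ec.
  have cne : forall c, e w' c -> u1 != c /\ w' != c.
    move=> c ec; split; apply/eqP => E.
      by apply: (g2 u1 w' eww'); apply: r1; rewrite E.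
    by apply: (g2 w' w'); [rewrite {2}E | exact: R_refl].
  have u1B : u1 \in A :\: B.
    apply: notB => //; last exact: R_refl.
    by apply/negP => H; apply: (g2 u1 v1 ewv1 H).
  have [a1 b1] := cne _ ec1; have [a2 b2] := cne _ ec2.
  exact: (fin _ _ _ _ u1B w'A (cAB _ ec1) (cAB _ ec2) ww' a1 a2 b1 b2 c12).
move: wK => /R_pred/(_ wu1) [q qK eqw].
have qKK : q \in R e K u1 by apply: (up K'') => //; rewrite eK -addn2 leq_addr.
have [r eqr rw] := other reg eqw.
have rK' : r \in R e K''.+1 u1 by apply: R_ext qK eqr.
have rK : r \in R e K u1 by apply: (up K''.+1) => //; rewrite eK.
have rw' : r != w'.
  apply/eqP => E; apply: (g1 q r w r eqr eqw rw (R_refl _ _ _)).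
  by apply: r1; rewrite E.
case: (boolP (r \in B)) => rB.
  have rv : r != v.
    apply/eqP => E; apply: (g1 q r w v1 eqr eqw rw); last exact: r1.
    by apply: r1; rewrite E.
  have rv1 : r \in R e K v1 by move: rB; rewrite in_setU1 (negPf rv).
  have rn : r \notin R e K''.+1 v1.
    apply/negP => H; apply: (g1 q r w r eqr eqw rw (R_refl _ _ _)).
    by rewrite eK; apply: R_child ewv1 H.
  have [c1 [c2 [c12 ec1 ec2]]] := kids reg r.
  have cAB : forall c, e r c -> c \in A :\: B.
    move=> c ec; apply: notB.
    - apply/eqP => E; apply: (g1 q r w v1 eqr eqw rw); last exact: r1.
      by apply: (r2 _ c _ ec); rewrite E.
    - by apply/negP => H; apply: (g3 v1 r c rv1 rn ec H).
    - exact: ext rK' ec.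
  have cne : forall c, e r c -> w != c /\ w' != c.
    move=> c ec; split; apply/eqP => E.
      by apply: (g1 q r w w eqr eqw rw); [apply: r1; rewrite E | exact: R_refl].
    by apply: (g1 q r w w' eqr eqw rw); [apply: r1; rewrite E | apply: r1].
  have [a1 b1] := cne _ ec1; have [a2 b2] := cne _ ec2.
  exact: (fin _ _ _ _ wA w'A (cAB _ ec1) (cAB _ ec2) ww' a1 a2 b1 b2 c12).
have rA : r \in A :\: B by rewrite in_setD rB in_setU1 rK orbT.
case: (boolP (u \in B)) => uB.
  have uv1 : u \in R e K v1 by move: uB; rewrite in_setU1 (negPf huv).
  have un : u \notin R e K''.+1 v1.
    apply/negP => H; apply: (g1 v v1 u2 u2 evv1 evu2 v1u2 _ (R_refl _ _ _)).
    exact: ext H euu2.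
  have u1A : u1 \in A :\: B.
    apply: notB => //; last exact: R_refl.
    by apply/negP => H; apply: (g3 v1 u u1 uv1 un euu1 H).
  have w'u1 : w' != u1.
    by apply/eqP => E; apply: (g2 w u1 _ wKK); rewrite -E.
  have ru1 : r != u1.
    by apply/eqP => E; apply: (g2 q u1 _ qKK); rewrite -E.
  by apply: (fin _ _ _ _ wA w'A rA u1A ww' _ wu1 _ w'u1 ru1); rewrite eq_sym.
have uA' : u \in A :\: B by rewrite in_setD uB in_setU1 eqxx.
by apply: (fin _ _ _ _ wA w'A rA uA' ww' _ (neqA _ wKK) _ (neqA _ w'K) (neqA _ rK));
  rewrite eq_sym.
Qed.

Theorem theorem3 (V : finType) (e : rel V) (k : nat) (u v u1 u2 v1 : V) :
  3 <= k ->
  diregular_dk_eps e 2 k 3 ->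
  u != v ->
  out_nbhd e u = [set u1; u2] ->
  out_nbhd e v = [set v1; u2] ->
  out_nbhd e u :&: out_nbhd e v = [set u2] ->
  outlier e k u v1 /\ outlier e k v u1.
Proof.
move=> hk [geo reg cardV] huv hu hv hI.
have mem : forall x a b y, out_nbhd e x = [set a; b] -> e x y = (y \in [set a; b]).
  by move=> x a b y H; rewrite -H inE.
have euu1 : e u u1 by rewrite (mem _ _ _ _ hu) !inE eqxx.
have euu2 : e u u2 by rewrite (mem _ _ _ _ hu) !inE eqxx orbT.
have evv1 : e v v1 by rewrite (mem _ _ _ _ hv) !inE eqxx.
have evu2 : e v u2 by rewrite (mem _ _ _ _ hv) !inE eqxx orbT.
have hu' : forall y, e u y -> y = u1 \/ y = u2.
  by move=> y; rewrite (mem _ _ _ _ hu) => /set2P.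
have hv' : forall y, e v y -> y = v1 \/ y = u2.
  by move=> y; rewrite (mem _ _ _ _ hv) => /set2P.
have u1u2 : u1 != u2 by have := (reg u).1; rewrite hu cards2; case: (u1 != u2).
have v1u2 : v1 != u2 by have := (reg v).1; rewrite hv cards2; case: (v1 != u2).
have u1v1 : u1 != v1.
  apply/eqP => E.
  have : u1 \in out_nbhd e u :&: out_nbhd e v by rewrite in_setI hu hv E !inE !eqxx.
  by rewrite hI inE => /eqP E2; rewrite E2 eqxx in u1u2.
case: k hk geo cardV => [|K] // hk geo cardV.
split.
- exact: (half hk (And3 geo reg cardV) huv euu1 euu2 evv1 evu2 hu' u1u2 v1u2 u1v1).
- apply: (half hk (And3 geo reg cardV) _ evv1 evu2 euu1 euu2 hv' v1u2 u1u2);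
    by rewrite eq_sym.
Qed.
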